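(* For every delay function $\mathbf{d}$ it holds that $E_{C(\mathbf{d})}=E_{\mathcal{M}(\mathbf{d})}$. Consequently $\inf_{\mathbf{d}}E_{C(\mathbf{d})}=\inf_{\mathbf{d}}E_{\mathcal{M}(\mathbf{d})}$.
   Context: $C=(S,\lambda,\mathrm{P},S_{fd},\mathrm{F},s_{in})$ is a fdCTMC structure: $S$ finite, $\lambda>0$, $\mathrm{P}\in\mathbb{R}_{\ge0}^{S\times S}$ and $\mathrm{F}\in\mathbb{R}_{\ge0}^{S_{fd}\times S}$ stochastic, $S_{fd}\subseteq S$, $s_{in}\in S$. For a delay function $\mathbf{d}:S_{fd}\to\mathbb{R}_{>0}$, the fdCTMC $C(\mathbf{d})$ has runs $(s_0,d_0)t_0(s_1,d_1)t_1\cdots$ with $s_0=s_{in}$, $d_0=\mathbf{d}(s_0)$ if $s_0\in S_{fd}$, else $\infty$; from $(s_i,d_i)$ an $\mathrm{Exp}(\lambda)$ time is sampled; if it is $t_i<d_i$, $s_{i+1}\sim\mathrm{P}(s_i,\cdot)$ and $d_{i+1}=d_i-t_i$ if $s_i,s_{i+1}\in S_{fd}$, $=\mathbf{d}(s_{i+1})$ if $s_{i+1}\in S_{fd},s_i\notin S_{fd}$, $=\infty$ if $s_{i+1}\notin S_{fd}$ (exp-delay transition); otherwise $t_i=d_i$, $s_{i+1}\sim\mathrm{F}(s_i,\cdot)$, $d_{i+1}=\mathbf{d}(s_{i+1})$ if $s_{i+1}\in S_{fd}$, else $\infty$ (fixed-delay transition). A cost structure $\mathit{Cost}=(G,\mathcal{R},\mathcal{I}_{\mathrm{P}},\mathcal{I}_{\mathrm{F}})$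 has goal set $G\subseteq S$, rates $\mathcal{R}:S\to\mathbb{R}_{\ge0}$, impulse costs $\mathcal{I}_{\mathrm{P}},\mathcal{I}_{\mathrm{F}}:S\times S\to\mathbb{R}_{\ge0}$; the total cost of a run is $\sum_{i<n}(t_i\mathcal{R}(s_i)+I_i)$ for the least $n>0$ with $s_n\in G$ ($\infty$ if none), $I_i$ being $\mathcal{I}_{\mathrm{P}}(s_i,s_{i+1})$ or $\mathcal{I}_{\mathrm{F}}(s_i,s_{i+1})$ for exp-/fixed-delay transitions; $E_{C(\mathbf{d})}$ is its expectation (with a different goal set $G'$ we write $E^{\mathit{Cost}[G']}$). Standing assumption: $S_{fd}=S^{reset}\uplus S^{keep}$ where $s'\in S^{reset}$ iff $\mathrm{P}(s,s')>0$ for some $s\in S\setminus S_{fd}$ or $\mathrm{F}(s,s')>0$ for some $s\in S_{fd}$, and $s'\in S^{keep}$ iff $\mathrm{P}(s,s')>0$ for some $s\in S_{fd}$ (these are disjoint); moreover $s_{in}\in S^{reset}$ if $s_{in}\in S_{fd}$. Let $S'=S^{reset}\cup(S\setminus S_{fd})\cup G$. The DTMDP $\mathcal{M}$ has vertices $S'$, initial vertex $s_{in}$, goal vertices $G$, actions $\mathbb{R}_{>0}\cup\{\infty\}$, where positive reals are enabled in $S^{reset}$ and $\infty$ in $S\setminus S_{fd}$. For $s\in S'$ and enabled action $d$, let $C[s](d)$ be $C$ with initial state $s$ and any delay function assigning $d$ to $s$; the transition probability $T(s,d)(s')$ is the probability in $C[s](d)$ that the first state of $S'$ visited after at least one transition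 is $s'$, and the one-step cost $c(s,d)=E^{\mathit{Cost}[S']}_{C[s](d)}$. A delay function $\mathbf{d}$ acts as a memoryless strategy of $\mathcal{M}$ (choosing $\mathbf{d}(s)$ in $s\in S^{reset}$ and $\infty$ in $S\setminus S_{fd}$), and $E_{\mathcal{M}(\mathbf{d})}$ is the expected sum of one-step costs accumulated from $s_{in}$ before reaching $G$ ($\infty$ if $G$ is not reached). *)

(* Defs.v *)
From HB Require Import structures.
From mathcomp Require Import all_boot all_order all_algebra.
From mathcomp Require Import all_classical all_reals all_analysis.

Set Implicit Arguments.
Unset Strict Implicit.
Unset Printing Implicit Defensive.

Import Order.TTheory GRing.Theory Num.Theory.
Local Open Scope ring_scope.
Local Open Scope classical_set_scope.

Record fdCTMC (R : realType) (S : finType) := FdCTMC {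
  lam  : R;
  Pm   : S -> S -> R;        (* exp-delay transition matrix *)
  Sfd  : {set S};
  Fm   : S -> S -> R;        (* fixed-delay transition matrix (rows in S_fd) *)
  sin  : S
}.

Record costStruct (R : realType) (S : finType) := CostStruct {
  Goal : {set S};
  Rate : S -> R;
  IP   : S -> S -> R;
  IF   : S -> S -> R
}.

Section Defs.
Variables (R : realType) (S : finType).
Variable C : fdCTMC R S.
Variable K : costStruct R S.

Local Notation mu := (@lebesgue_measure R).

Definition fdCTMC_wf : Prop :=
  0 < lam C /\
  (forall s s', 0 <= Pm C s s') /\ (forall s, \sum_(s' : S) Pm C s s' = 1) /\
  (forall s s', s \in Sfd C -> 0 <= Fm C s s') /\
  (forall s, s \in Sfd C -> \sum_(s' : S) Fm C s s' = 1).

Definition cost_wf : Prop :=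
  (forall s, 0 <= Rate K s) /\ (forall s s', 0 <= IP K s s') /\
  (forall s s', 0 <= IF K s s').

Definition Sreset (s' : S) : bool :=
  (s' \in Sfd C) &&
  ([exists s, (s \notin Sfd C) && (0 < Pm C s s')] ||
   [exists s, (s \in Sfd C) && (0 < Fm C s s')]).

Definition Skeep (s' : S) : bool :=
  (s' \in Sfd C) && [exists s, (s \in Sfd C) && (0 < Pm C s s')].

Definition standing_assumption : Prop :=
  (forall s, s \in Sfd C -> Sreset s || Skeep s) /\
  (forall s, ~~ (Sreset s && Skeep s)) /\
  (sin C \in Sfd C -> Sreset (sin C)).

(* delay functions: d : S -> R, positive on S_fd (values off S_fd unused) *)
Definition delay_fun (d : S -> R) : Prop := forall s, s \in Sfd C -> 0 < d s.

Definition Sprime : pred S :=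
  fun s => Sreset s || (s \notin Sfd C) || (s \in Goal K).

Local Open Scope ereal_scope.

(* initial remaining delay of a state s under delay function D *)
Definition init_delay (D : S -> R) (s : S) : \bar R :=
  if s \in Sfd C then (D s)%:E else +oo.

(* remaining delay after an exp-delay transition s -> s' at time t *)
Definition delay_exp (D : S -> R) (s : S) (dl : \bar R) (t : R) (s' : S)
  : \bar R :=
  if s' \in Sfd C then (if s \in Sfd C then dl - t%:E else (D s')%:E)
  else +oo.

Definition delay_fix (D : S -> R) (s' : S) : \bar R :=
  if s' \in Sfd C then (D s')%:E else +oo.

(* One step of C(D) from configuration (s, dl): expectation of
   g t s' dl' fixed, where t is the time spent, s' the next state,
   dl' the next remaining delay and fixed tells whether the transition
   was a fixed-delay one.  The waiting time is Exp(lam); if it is < dl an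
   exp-delay transition (via P) happens, otherwise at time dl a
   fixed-delay transition (via F). *)
Definition stepE (D : S -> R) (g : R -> S -> \bar R -> bool -> \bar R)
  (s : S) (dl : \bar R) : \bar R :=
  let expPart (t : R) :=
    (lam C * expR (- (lam C * t)))%:E *
    \sum_(s' : S) ((Pm C s s')%:E * g t s' (delay_exp D s dl t s') false) in
  match dl with
  | EFin r =>
      (\int[mu]_(t in [set t : R | (0 <= t)%R && (t < r)%R]) expPart t) +
      (expR (- (lam C * r)))%:E *
        \sum_(s' : S) ((Fm C s s')%:E * g r s' (delay_fix D s') true)
  | _ => \int[mu]_(t in [set t : R | (0 <= t)%R]) expPart t
  end.

Definition trans_cost (s : S) (t : R) (s' : S) (fixed : bool) : \bar R :=
  (t * Rate K s + (if fixed then IF K s s' else IP K s s'))%:E.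

(* expected cost accumulated during the first n transitions, stopping
   at the first visit (after >= 1 transition) of the goal set Gs *)
Fixpoint costN (D : S -> R) (Gs : pred S) (n : nat) (s : S) (dl : \bar R)
  : \bar R :=
  match n with
  | O => 0
  | n'.+1 => stepE D (fun t s' dl' fx =>
              trans_cost s t s' fx + (if Gs s' then 0 else costN D Gs n' s' dl'))
            s dl
  end.

Fixpoint reachN (D : S -> R) (Gs : pred S) (n : nat) (s : S) (dl : \bar R)
  : \bar R :=
  match n with
  | O => 0
  | n'.+1 => stepE D (fun t s' dl' fx =>
              if Gs s' then 1 else reachN D Gs n' s' dl') s dl
  end.

Fixpoint hitN (D : S -> R) (Gs : pred S) (x : S) (n : nat) (s : S)
  (dl : \bar R) : \bar R :=
  match n with
  | O => 0
  | n'.+1 => stepE D (fun t s' dl' fx =>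
              if Gs s' then (if s' == x then 1 else 0)
              else hitN D Gs x n' s' dl') s dl
  end.

(* expected total cost from configuration (s, dl) with goal set Gs:
   +oo if Gs is not reached with probability 1 (the total cost of a run
   not reaching Gs is +oo), else the limit of the partial expectations *)
Definition ExpCostFrom (D : S -> R) (Gs : pred S) (s : S) (dl : \bar R)
  : \bar R :=
  if ereal_sup (range (fun n => reachN D Gs n s dl)) < 1 then +oo
  else ereal_sup (range (fun n => costN D Gs n s dl)).

Definition ExpCost (D : S -> R) (Gs : pred S) (s : S) : \bar R :=
  ExpCostFrom D Gs s (init_delay D s).

Definition E_C (d : S -> R) : \bar R :=
  ExpCost d (fun s => s \in Goal K) (sin C).

(* actions: reals (for S^reset) and +oo (for S \ S_fd), as \bar R.
   C[s](a): C with initial state s and a delay function assigning a to s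
   (value 1 elsewhere; irrelevant) *)
Definition delay_at (s : S) (a : \bar R) : S -> R :=
  fun x => if x == s then (if a is EFin r then r else 1%R) else 1%R.

Definition Tm (s : S) (a : \bar R) (s' : S) : \bar R :=
  ereal_sup (range (fun n =>
    hitN (delay_at s a) Sprime s' n s (init_delay (delay_at s a) s))).

Definition cm (s : S) (a : \bar R) : \bar R :=
  ExpCost (delay_at s a) Sprime s.

Definition strat (d : S -> R) (s : S) : \bar R :=
  if s \in Sfd C then (d s)%:E else +oo.

Fixpoint costM (d : S -> R) (n : nat) (s : S) : \bar R :=
  match n with
  | O => 0
  | n'.+1 => cm s (strat d s) +
      \sum_(s' : S | Sprime s')
        Tm s (strat d s) s' * (if s' \in Goal K then 0 else costM d n' s')
  end.

Fixpoint reachM (d : S -> R) (n : nat) (s : S) : \bar R :=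
  match n with
  | O => 0
  | n'.+1 => \sum_(s' : S | Sprime s')
        Tm s (strat d s) s' * (if s' \in Goal K then 1 else reachM d n' s')
  end.

Definition E_M (d : S -> R) : \bar R :=
  if ereal_sup (range (fun n => reachM d n (sin C))) < 1 then +oo
  else ereal_sup (range (fun n => costM d n (sin C))).

End Defs.

(* Main.v *)
Require Import Defs.
From HB Require Import structures.
From mathcomp Require Import all_boot all_order all_algebra.
From mathcomp Require Import all_classical all_reals all_analysis.
From mathcomp Require Import measurable_realfun lebesgue_integral ftc exponential_distribution.
Set Implicit Arguments.
Unset Strict Implicit.
Unset Printing Implicit Defensive.
Import Order.TTheory GRing.Theory Num.Theory.
Local Open Scope ring_scope.
Local Open Scope classical_set_scope.
Local Open Scope ereal_scope.

Section Main.
Variables (R : realType) (S : finType) (C : fdCTMC R S) (K : costStruct R S).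
Hypothesis HC : fdCTMC_wf C.
Hypothesis HK : cost_wf K.
Local Notation mu := (@lebesgue_measure R).
Local Notation SF := (Sfd C).

Definition dom (dl : \bar R) : set R :=
  match dl with
  | EFin r => [set t : R | (0 <= t)%R && (t < r)%R]
  | _ => [set t : R | (0 <= t)%R]
  end.

Definition intg (D : S -> R) (g : R -> S -> \bar R -> bool -> \bar R) (s : S)
  (dl : \bar R) (t : R) : \bar R :=
  (lam C * expR (- (lam C * t)))%:E *
    \sum_(s' : S) ((Pm C s s')%:E * g t s' (delay_exp C D s dl t s') false).

Definition fixp (D : S -> R) (g : R -> S -> \bar R -> bool -> \bar R) (s : S)
  (r : R) : \bar R :=
  (expR (- (lam C * r)))%:E *
    \sum_(s' : S) ((Fm C s s')%:E * g r s' (delay_fix C D s') true).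

Lemma stepEE D g s dl : stepE C D g s dl =
  match dl with
  | EFin r => \int[mu]_(t in dom dl) intg D g s dl t + fixp D g s r
  | _ => \int[mu]_(t in dom dl) intg D g s dl t
  end.
Proof. by case: dl. Qed.

Lemma lam_gt0 : (0 < lam C)%R. Proof. by case: HC. Qed.
Lemma Pm_ge0 s s' : (0 <= Pm C s s')%R. Proof. by case: HC => _ [H _]; exact: H. Qed.
Lemma Pm_sum s : (\sum_(s' : S) Pm C s s' = 1)%R. Proof. by case: HC => _ [_ [H _]]; exact: H. Qed.
Lemma Fm_ge0 s s' : s \in SF -> (0 <= Fm C s s')%R. Proof. by case: HC => _ [_ [_ [H _]]]; exact: H. Qed.
Lemma Fm_sum s : s \in SF -> (\sum_(s' : S) Fm C s s' = 1)%R. Proof. by case: HC => _ [_ [_ [_ H]]]; exact: H. Qed.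

Lemma intg_ge0_fac t : (0 <= lam C * expR (- (lam C * t)))%R.
Proof. by rewrite mulr_ge0 ?expR_ge0 // ltW // lam_gt0. Qed.

Definition valid (s : S) (dl : \bar R) : Prop :=
  dl = +oo \/ exists r, dl = r%:E /\ (0 <= r)%R /\ s \in SF.

Definition Dpos (D : S -> R) := forall s, s \in SF -> (0 < D s)%R.

Lemma valid_exp D s dl t s' : Dpos D -> dl <> -oo -> dom dl t ->
  valid s' (delay_exp C D s dl t s').
Proof.
move=> HD Hdl; rewrite /delay_exp.
case: ifPn => s'F; last by left.
case: ifPn => sF; last first.
  by move=> _; right; exists (D s'); split => //; split => //; exact/ltW/HD.
case: dl Hdl => [r| |] //= _; last by left.
move=> /andP[t0 tr]; right; exists (r - t)%R; split => //; split => //.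
by rewrite subr_ge0 ltW.
Qed.

Lemma valid_fix D s' : Dpos D -> valid s' (delay_fix C D s').
Proof.
move=> HD; rewrite /delay_fix; case: ifPn => s'F; last by left.
by right; exists (D s'); split => //; split => //; exact/ltW/HD.
Qed.

Lemma valid_ninfty s dl : valid s dl -> dl <> -oo.
Proof. by case=> [->//|[r [-> _]]]. Qed.

Lemma dom_ge0 dl t : dom dl t -> (0 <= t)%R.
Proof. by case: dl => [r /andP[]| |]. Qed.

Lemma measurable_dom dl : measurable (dom dl).
Proof.
case: dl => [r| |] /=.
- rewrite (_ : [set _ | _] = `[0%R, r[%classic); first exact: measurable_itv.
  by apply/seteqP; split => t /=; rewrite in_itv /=.
- rewrite (_ : [set _ | _] = `[0%R, +oo[%classic); first exact: measurable_itv.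
  by apply/seteqP; split => t /=; rewrite in_itv /= andbT.
- rewrite (_ : [set _ | _] = `[0%R, +oo[%classic); first exact: measurable_itv.
  by apply/seteqP; split => t /=; rewrite in_itv /= andbT.
Qed.

Lemma stepE_congr D1 D2 g1 g2 s dl :
  (forall t, dom dl t -> forall s', Pm C s s' != 0%R ->
     g1 t s' (delay_exp C D1 s dl t s') false =
     g2 t s' (delay_exp C D2 s dl t s') false) ->
  (forall r, dl = r%:E -> forall s', Fm C s s' != 0%R ->
     g1 r s' (delay_fix C D1 s') true = g2 r s' (delay_fix C D2 s') true) ->
  stepE C D1 g1 s dl = stepE C D2 g2 s dl.
Proof.
move=> He Hf; rewrite !stepEE.
have EI : \int[mu]_(t in dom dl) intg D1 g1 s dl t =
          \int[mu]_(t in dom dl) intg D2 g2 s dl t.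
  apply: eq_integral => t; rewrite inE => Ht; rewrite /intg; congr (_ * _).
  apply: eq_bigr => s' _; have [->|nz] := eqVneq (Pm C s s') 0%R.
    by rewrite !mul0e.
  by rewrite He.
case: dl He Hf EI => [r| |] He Hf EI; rewrite EI //; congr (_ + _).
rewrite /fixp; congr (_ * _); apply: eq_bigr => s' _.
have [->|nz] := eqVneq (Fm C s s') 0%R; first by rewrite !mul0e.
by rewrite (Hf r).
Qed.


Lemma stepE_ge0 D g s dl : valid s dl ->
  (forall t, dom dl t -> forall s', 0 <= g t s' (delay_exp C D s dl t s') false) ->
  (forall r, dl = r%:E -> forall s', 0 <= g r s' (delay_fix C D s') true) ->
  0 <= stepE C D g s dl.
Proof.
move=> Hv He Hf.
have I0 : 0 <= \int[mu]_(t in dom dl) intg D g s dl t.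
  apply: integral_ge0 => t Ht; rewrite /intg; apply: mule_ge0.
    by rewrite lee_fin intg_ge0_fac.
  by apply: sume_ge0 => s' _; apply: mule_ge0; [rewrite lee_fin Pm_ge0|exact: He].
rewrite stepEE; case: dl Hv He Hf I0 => [r| |] Hv He Hf I0 //.
apply: adde_ge0 => //; rewrite /fixp; apply: mule_ge0.
  by rewrite lee_fin expR_ge0.
have sF : s \in SF by case: Hv => [//|[r' [[_] [_ ->]]]].
by apply: sume_ge0 => s' _; apply: mule_ge0; [rewrite lee_fin Fm_ge0|exact: Hf].
Qed.

Fixpoint Q (D : S -> R) (c : S -> R -> S -> bool -> \bar R) (Gs : pred S)
  (h : S -> \bar R) (n : nat) (s : S) (dl : \bar R) : \bar R :=
  match n with
  | O => 0
  | n'.+1 => stepE C D (fun t s' dl' fx =>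
      c s t s' fx + (if Gs s' then h s' else Q D c Gs h n' s' dl')) s dl
  end.

Definition gQ D c Gs h n s := fun t s' dl' fx =>
  c s t s' fx + (if Gs s' then h s' else Q D c Gs h n s' dl').

Lemma QS D c Gs h n s dl : Q D c Gs h n.+1 s dl = stepE C D (gQ D c Gs h n s) s dl.
Proof. by []. Qed.

Definition cgood (c : S -> R -> S -> bool -> \bar R) :=
  (forall s t s' fx, (0 <= t)%R -> 0 <= c s t s' fx) /\
  (forall s s' fx, measurable_fun setT (fun t => c s t s' fx)).

Lemma valid_r s r : valid s r%:E -> (0 <= r)%R /\ s \in SF.
Proof. by case=> [//|[r' [[<-] H]]]. Qed.

Lemma Q_ge0 D c Gs h : cgood c -> (forall x, 0 <= h x) -> Dpos D ->
  forall n s dl, valid s dl -> 0 <= Q D c Gs h n s dl.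
Proof.
move=> [c0 _] h0 HD; elim=> [//|n IH] s dl Hv /=.
apply: stepE_ge0 => //.
- move=> t Ht s'; apply: adde_ge0; first exact/c0/dom_ge0/Ht.
  case: (Gs s'); first exact: h0.
  apply: IH; apply: valid_exp => //; exact: (valid_ninfty Hv).
- move=> r Er s'; subst dl; have [r0 _] := valid_r Hv.
  apply: adde_ge0; first exact: c0.
  case: (Gs s'); first exact: h0.
  by apply: IH; exact: valid_fix.
Qed.

Lemma stepE_le D1 D2 g1 g2 s dl : valid s dl ->
  (forall t, dom dl t -> forall s', 0 <= g1 t s' (delay_exp C D1 s dl t s') false) ->
  measurable_fun (dom dl) (intg D1 g1 s dl) ->
  measurable_fun (dom dl) (intg D2 g2 s dl) ->
  (forall t, dom dl t -> forall s', Pm C s s' != 0%R ->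
     g1 t s' (delay_exp C D1 s dl t s') false <=
     g2 t s' (delay_exp C D2 s dl t s') false) ->
  (forall r, dl = r%:E -> forall s', Fm C s s' != 0%R ->
     g1 r s' (delay_fix C D1 s') true <= g2 r s' (delay_fix C D2 s') true) ->
  stepE C D1 g1 s dl <= stepE C D2 g2 s dl.
Proof.
move=> Hv g10 m1 m2 He Hf.
have EI : \int[mu]_(t in dom dl) intg D1 g1 s dl t <=
          \int[mu]_(t in dom dl) intg D2 g2 s dl t.
  apply: ge0_le_integral => //.
  - exact: measurable_dom.
  - move=> t Ht; rewrite /intg; apply: mule_ge0.
      by rewrite lee_fin intg_ge0_fac.
    by apply: sume_ge0 => s' _; apply: mule_ge0; [rewrite lee_fin Pm_ge0|exact: g10].
  - move=> t Ht; rewrite /intg; apply: lee_wpmul2l.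
      by rewrite lee_fin intg_ge0_fac.
    apply: lee_sum => s' _; have [->|nz] := eqVneq (Pm C s s') 0%R.
      by rewrite !mul0e.
    by apply: lee_wpmul2l; [rewrite lee_fin Pm_ge0|exact: He].
rewrite !stepEE; case: dl Hv g10 m1 m2 He Hf EI => [r| |] Hv g10 m1 m2 He Hf EI //.
apply: leeD => //; rewrite /fixp; apply: lee_wpmul2l.
  by rewrite lee_fin expR_ge0.
have [_ sF] := valid_r Hv.
apply: lee_sum => s' _; have [->|nz] := eqVneq (Fm C s s') 0%R.
  by rewrite !mul0e.
by apply: lee_wpmul2l; [rewrite lee_fin Fm_ge0|exact: Hf].
Qed.


Lemma meas_fac : measurable_fun setT (fun t : R => (lam C * expR (- (lam C * t)))%:E).
Proof.
apply/measurable_EFinP; apply: measurable_funM => //.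
apply: measurableT_comp; first exact: measurable_expR.
apply: measurableT_comp => //; apply: measurable_funM => //.
Qed.

Definition gq (c : S -> R -> S -> bool -> \bar R) (Gs : pred S) (h : S -> \bar R)
  (q : S -> \bar R -> \bar R) (s : S) := fun t s' dl' fx =>
  c s t s' fx + (if Gs s' then h s' else q s' dl').

Lemma gQ_gq D c Gs h n s : gQ D c Gs h n s = gq c Gs h (Q D c Gs h n) s.
Proof. by []. Qed.

Lemma intg_meas_prod D c Gs h q s : cgood c ->
  (forall s', measurable_fun setT (fun r : R => q s' r%:E)) ->
  measurable_fun setT (fun p : R * R => intg D (gq c Gs h q s) s p.1%:E p.2).
Proof.
move=> [_ cm] Hq; rewrite /intg.
apply: emeasurable_funM.
  exact: (measurableT_comp meas_fac measurable_snd).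
apply: emeasurable_sum => s'.
apply: emeasurable_funM => //; rewrite /gq.
apply: emeasurable_funD; first exact: (measurableT_comp (cm s s' false) measurable_snd).
case: (Gs s') => //.
have [s'F|s'F] := boolP (s' \in SF); last first.
  have -> : (fun p : R * R => q s' (delay_exp C D s p.1%:E p.2 s')) = cst (q s' +oo).
    by apply: funext => p; rewrite /delay_exp (negbTE s'F).
  exact: measurable_cst.
have [sF|sF] := boolP (s \in SF); last first.
  have -> : (fun p : R * R => q s' (delay_exp C D s p.1%:E p.2 s')) = cst (q s' (D s')%:E).
    by apply: funext => p; rewrite /delay_exp (negbTE sF) s'F.
  exact: measurable_cst.
have -> : (fun p : R * R => q s' (delay_exp C D s p.1%:E p.2 s')) =
  (fun r : R => q s' r%:E) \o (fun p : R * R => p.1 - p.2)%R.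
  by apply: funext => p; rewrite /delay_exp sF s'F.
apply: measurableT_comp => //; apply: measurable_funB => //.
Qed.


Lemma intg_meas D c Gs h q s dl : cgood c ->
  (forall s', measurable_fun setT (fun r : R => q s' r%:E)) ->
  measurable_fun setT (intg D (gq c Gs h q s) s dl).
Proof.
move=> cg Hq; case: dl => [r| |].
- have -> : intg D (gq c Gs h q s) s r%:E =
    (fun p : R * R => intg D (gq c Gs h q s) s p.1%:E p.2) \o (fun t => (r, t)) by [].
  apply: measurableT_comp; first exact: intg_meas_prod.
  exact: measurable_fun_pair.
- case: cg => _ cm; rewrite /intg; apply: emeasurable_funM; first exact: meas_fac.
  apply: emeasurable_sum => s'; apply: emeasurable_funM => //; rewrite /gq.
  apply: emeasurable_funD; first exact: cm.
  case: (Gs s') => //.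
  have -> : (fun t : R => q s' (delay_exp C D s +oo t s')) =
     cst (q s' (delay_exp C D s +oo 0%R s')).
    by apply: funext => t; rewrite /delay_exp.
  exact: measurable_cst.
- case: cg => _ cm; rewrite /intg; apply: emeasurable_funM; first exact: meas_fac.
  apply: emeasurable_sum => s'; apply: emeasurable_funM => //; rewrite /gq.
  apply: emeasurable_funD; first exact: cm.
  case: (Gs s') => //.
  have -> : (fun t : R => q s' (delay_exp C D s -oo t s')) =
     cst (q s' (delay_exp C D s -oo 0%R s')).
    by apply: funext => t; rewrite /delay_exp.
  exact: measurable_cst.
Qed.

Definition Eset : set (R * R) := [set p | (0 <= p.2)%R && (p.2 < p.1)%R].

Lemma measurable_Eset : measurable Eset.
Proof.
have -> : Eset = (setT `&` (fun p : R * R => p.2) @^-1` `[0%R, +oo[) `&`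
                 (setT `&` (fun p : R * R => p.1 - p.2)%R @^-1` `]0%R, +oo[).
  apply/seteqP; split => -[r t] /=; rewrite /Eset /= !in_itv /= !andbT.
    by move=> /andP[-> tr]; split => //; split => //; rewrite subr_gt0.
  by move=> [[_ ->] [_]]; rewrite subr_gt0.
apply: measurableI.
  by apply: measurable_snd => //; exact: measurable_itv.
by apply: (measurable_funB measurable_fst measurable_snd) => //; exact: measurable_itv.
Qed.

Lemma Q_meas D c Gs h : cgood c -> (forall x, 0 <= h x) -> Dpos D ->
  forall n s, measurable_fun setT (fun r : R => Q D c Gs h n s r%:E).
Proof.
move=> cg h0 HD; elim=> [|n IH] s; first exact: measurable_cst.
set g := gq c Gs h (Q D c Gs h n) s.
set f := (fun p : R * R => intg D g s p.1%:E p.2) \_ Eset.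
have -> : (fun r : R => Q D c Gs h n.+1 s r%:E) =
          (fun r => fubini_F mu f r + fixp D g s r).
  apply: funext => r; rewrite QS stepEE gQ_gq; congr (_ + _).
  rewrite integral_mkcond /fubini_F; apply: eq_integral => t _.
  by rewrite /f !patchE.
apply: emeasurable_funD.
  apply: measurable_fun_fubini_tonelli_F.
    apply: (proj1 (measurable_restrictT _ measurable_Eset)).
    apply: measurable_funTS; exact: intg_meas_prod.
  move=> [r t]; rewrite /f patchE; case: ifPn => // /set_mem /= Hrt.
  rewrite /intg; apply: mule_ge0; first by rewrite lee_fin intg_ge0_fac.
  apply: sume_ge0 => s' _; apply: mule_ge0; first by rewrite lee_fin Pm_ge0.
  rewrite /g /gq; apply: adde_ge0.
    by case: cg => c0 _; apply: c0; case/andP: Hrt.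
  case: (Gs s'); first exact: h0.
  apply: Q_ge0 => //; apply: valid_exp => //.
rewrite /fixp; apply: emeasurable_funM.
  apply/measurable_EFinP; apply: measurableT_comp; first exact: measurable_expR.
  apply: measurableT_comp => //; apply: measurable_funM => //.
apply: emeasurable_sum => s'; apply: emeasurable_funM => //; rewrite /g /gq.
apply: emeasurable_funD; first by case: cg => _ cm; exact: cm.
exact: measurable_cst.
Qed.


Section QProps.
Variables (D : S -> R) (c : S -> R -> S -> bool -> \bar R) (Gs : pred S) (h : S -> \bar R).
Hypotheses (cg : cgood c) (h0 : forall x, 0 <= h x) (HD : Dpos D).

Lemma gQ_exp_ge0 n s dl t s' : valid s dl -> dom dl t ->
  0 <= gQ D c Gs h n s t s' (delay_exp C D s dl t s') false.
Proof.
move=> Hv Ht; rewrite /gQ; apply: adde_ge0.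
  by case: cg => c0 _; apply: c0; exact: dom_ge0 Ht.
case: (Gs s'); first exact: h0.
by apply: Q_ge0 => //; apply: valid_exp => //; exact: valid_ninfty Hv.
Qed.

Lemma gQ_fix_ge0 n s r s' : (0 <= r)%R ->
  0 <= gQ D c Gs h n s r s' (delay_fix C D s') true.
Proof.
move=> r0; rewrite /gQ; apply: adde_ge0; first by case: cg => c0 _; exact: c0.
case: (Gs s'); first exact: h0.
by apply: Q_ge0 => //; exact: valid_fix.
Qed.

Lemma intgQ_meas n s dl : measurable_fun (dom dl) (intg D (gQ D c Gs h n s) s dl).
Proof. by apply: measurable_funTS; rewrite gQ_gq; apply: intg_meas => //; exact: Q_meas. Qed.

Lemma Q_ndS n s dl : valid s dl -> Q D c Gs h n s dl <= Q D c Gs h n.+1 s dl.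
Proof.
elim: n s dl => [|n IH] s dl Hv; first by apply: Q_ge0.
rewrite (QS _ _ _ _ n.+1) QS; apply: stepE_le => //.
- by move=> t Ht s'; exact: gQ_exp_ge0.
- exact: intgQ_meas.
- exact: intgQ_meas.
- move=> t Ht s' _; rewrite /gQ; apply: leeD => //; case: (Gs s') => //.
  by apply: IH; apply: valid_exp => //; exact: valid_ninfty Hv.
- move=> r Er s' _; rewrite /gQ; apply: leeD => //; case: (Gs s') => //.
  by apply: IH; exact: valid_fix.
Qed.

Lemma Q_nd m n s dl : (m <= n)%N -> valid s dl ->
  Q D c Gs h m s dl <= Q D c Gs h n s dl.
Proof.
move=> mn Hv; rewrite -(subnKC mn); elim: (n - m)%N => [|k IH]; first by rewrite addn0.
by rewrite addnS; apply: le_trans IH _; exact: Q_ndS.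
Qed.

End QProps.


Lemma alg_lin (a : \bar R) (w u0 : S -> \bar R) (k : S -> \bar R) (u : S -> S -> \bar R) :
  0 <= a -> (forall y, 0 <= w y) -> (forall y, 0 <= u0 y) -> (forall x, 0 <= k x) ->
  (forall x y, 0 <= u x y) ->
  a * \sum_(y : S) (w y * (u0 y + \sum_(x : S) k x * u x y)) =
  a * \sum_(y : S) (w y * u0 y) + \sum_(x : S) k x * (a * \sum_(y : S) (w y * u x y)).
Proof.
move=> a0 w0 u00 k0 uu0.
have E1 : \sum_(y : S) (w y * (u0 y + \sum_(x : S) k x * u x y)) =
   \sum_(y : S) (w y * u0 y) + \sum_(x : S) k x * \sum_(y : S) (w y * u x y).
  rewrite (eq_bigr (fun y => w y * u0 y + \sum_(x : S) k x * (w y * u x y))); last first.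
    move=> y _; rewrite ge0_muleDr //; last by apply: sume_ge0 => x _; exact: mule_ge0.
    by rewrite ge0_sume_distrr; [congr (_ + _); apply: eq_bigr => x _; rewrite muleCA|
        move=> x _; exact: mule_ge0].
  rewrite big_split /=; congr (_ + _); rewrite exchange_big /=.
  by apply: eq_bigr => x _; rewrite ge0_sume_distrr // => y _; exact: mule_ge0.
rewrite E1 ge0_muleDr //; last 2 first.
- by apply: sume_ge0 => y _; exact: mule_ge0.
- by apply: sume_ge0 => x _; apply: mule_ge0 => //; apply: sume_ge0 => y _; exact: mule_ge0.
congr (_ + _); rewrite ge0_sume_distrr; last first.
  by move=> x _; apply: mule_ge0 => //; apply: sume_ge0 => y _; exact: mule_ge0.
by apply: eq_bigr => x _; rewrite muleCA.
Qed.

Lemma stepE_lin D g0 (gx : S -> R -> S -> \bar R -> bool -> \bar R) (k : S -> \bar R) s dl :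
  valid s dl -> (forall x, 0 <= k x) ->
  (forall t, dom dl t -> forall s', 0 <= g0 t s' (delay_exp C D s dl t s') false) ->
  (forall x t, dom dl t -> forall s', 0 <= gx x t s' (delay_exp C D s dl t s') false) ->
  (forall r, dl = r%:E -> forall s', 0 <= g0 r s' (delay_fix C D s') true) ->
  (forall x r, dl = r%:E -> forall s', 0 <= gx x r s' (delay_fix C D s') true) ->
  measurable_fun (dom dl) (intg D g0 s dl) ->
  (forall x, measurable_fun (dom dl) (intg D (gx x) s dl)) ->
  stepE C D (fun t s' dl' fx => g0 t s' dl' fx + \sum_(x : S) k x * gx x t s' dl' fx) s dl =
  stepE C D g0 s dl + \sum_(x : S) k x * stepE C D (gx x) s dl.
Proof.
move=> Hv k0 g0e gxe g0f gxf m0 mx.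
have intg0 : forall t, dom dl t -> 0 <= intg D g0 s dl t.
  move=> t Ht; apply: mule_ge0; first by rewrite lee_fin intg_ge0_fac.
  by apply: sume_ge0 => y _; apply: mule_ge0; [rewrite lee_fin Pm_ge0|exact: g0e].
have intgx : forall x t, dom dl t -> 0 <= intg D (gx x) s dl t.
  move=> x t Ht; apply: mule_ge0; first by rewrite lee_fin intg_ge0_fac.
  by apply: sume_ge0 => y _; apply: mule_ge0; [rewrite lee_fin Pm_ge0|exact: gxe].
have EI : \int[mu]_(t in dom dl)
    intg D (fun t s' dl' fx => g0 t s' dl' fx + \sum_(x : S) k x * gx x t s' dl' fx) s dl t =
  \int[mu]_(t in dom dl) intg D g0 s dl t +
  \sum_(x : S) k x * \int[mu]_(t in dom dl) intg D (gx x) s dl t.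
  have -> : \int[mu]_(t in dom dl)
    intg D (fun t s' dl' fx => g0 t s' dl' fx + \sum_(x : S) k x * gx x t s' dl' fx) s dl t =
    \int[mu]_(t in dom dl) (intg D g0 s dl t + \sum_(x : S) k x * intg D (gx x) s dl t).
    apply: eq_integral => t; rewrite inE => Ht; rewrite /intg alg_lin //.
    - by rewrite lee_fin intg_ge0_fac.
    - by move=> y; rewrite lee_fin Pm_ge0.
    - by move=> y; exact: g0e.
    - by move=> x y; exact: gxe.
  have H2 : forall t, dom dl t -> 0 <= \sum_(x : S) k x * intg D (gx x) s dl t.
    by move=> t Ht; apply: sume_ge0 => x _; apply: mule_ge0 => //; exact: intgx.
  have M2 : measurable_fun (dom dl) (fun t => \sum_(x : S) k x * intg D (gx x) s dl t).
    by apply: emeasurable_sum => x; apply: emeasurable_funM => //.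
  rewrite (ge0_integralD mu (measurable_dom dl) intg0 m0 H2 M2).
  have Mx : forall x, measurable_fun (dom dl) (fun t => k x * intg D (gx x) s dl t).
    by move=> x; apply: emeasurable_funM => //.
  have Px : forall x t, dom dl t -> 0 <= k x * intg D (gx x) s dl t.
    by move=> x t Ht; apply: mule_ge0 => //; exact: intgx.
  congr (_ + _); rewrite (ge0_integral_sum mu (measurable_dom dl) Mx Px).
  apply: eq_bigr => x _; rewrite ge0_integralZl //; first exact: measurable_dom.
  exact: mx.
  by move=> t Ht; exact: (intgx x t Ht).
rewrite !stepEE; case: dl Hv g0e gxe g0f gxf m0 mx intg0 intgx EI => [r| |] Hv g0e gxe g0f gxf m0 mx intg0 intgx EI //.
have [_ sF] := valid_r Hv.
have EF : fixp D (fun t s' dl' fx => g0 t s' dl' fx + \sum_(x : S) k x * gx x t s' dl' fx) s r =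
    fixp D g0 s r + \sum_(x : S) k x * fixp D (gx x) s r.
  have a0 : 0 <= (expR (- (lam C * r)))%:E by rewrite lee_fin expR_ge0.
  have w0 : forall y, 0 <= (Fm C s y)%:E by move=> y; rewrite lee_fin Fm_ge0.
  have u00 : forall y, 0 <= g0 r y (delay_fix C D y) true by move=> y; exact: g0f.
  have uu0 : forall x y, 0 <= gx x r y (delay_fix C D y) true by move=> x y; exact: gxf.
  by rewrite /fixp (alg_lin a0 w0 u00 k0 uu0).
have If0 : 0 <= \int[mu]_(t in dom r%:E) intg D g0 s r%:E t by apply: integral_ge0.
have Ifx : forall x, 0 <= \int[mu]_(t in dom r%:E) intg D (gx x) s r%:E t.
  by move=> x; apply: integral_ge0 => t Ht; exact: intgx.
have Ff0 : 0 <= fixp D g0 s r.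
  apply: mule_ge0; first by rewrite lee_fin expR_ge0.
  by apply: sume_ge0 => y _; apply: mule_ge0; [rewrite lee_fin Fm_ge0|exact: g0f].
have Ffx : forall x, 0 <= fixp D (gx x) s r.
  move=> x; apply: mule_ge0; first by rewrite lee_fin expR_ge0.
  by apply: sume_ge0 => y _; apply: mule_ge0; [rewrite lee_fin Fm_ge0|exact: gxf].
rewrite EI EF addeACA; congr (_ + _).
rewrite -big_split /=; apply: eq_bigr => x _; exact: (esym (ge0_muleDr (k x) (Ifx x) (Ffx x))).
Qed.


Definition c0 : S -> R -> S -> bool -> \bar R := fun _ _ _ _ => 0.
Definition ind (x : S) : S -> \bar R := fun y => if y == x then 1 else 0.

Lemma cgood_c0 : cgood c0.
Proof. by split => // s s' fx; exact: measurable_cst. Qed.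

Lemma ind_ge0 x y : 0 <= ind x y.
Proof. by rewrite /ind; case: ifP. Qed.

Lemma stepE_0 D s dl : stepE C D (fun _ _ _ _ => 0) s dl = 0.
Proof.
have I0 : \int[mu]_(t in dom dl) intg D (fun _ _ _ _ => 0) s dl t = 0.
  rewrite (eq_integral (cst 0)) ?integral0 // => t _.
  by rewrite /intg big1 ?mule0 // => y _; rewrite mule0.
rewrite stepEE; case: dl I0 => [r| |] I0 //.
by rewrite I0 add0e /fixp big1 ?mule0 // => y _; rewrite mule0.
Qed.

Lemma Q_lin D c Gs h : cgood c -> (forall x, 0 <= h x) -> Dpos D ->
  forall n s dl, valid s dl ->
  Q D c Gs h n s dl = Q D c Gs (fun _ => 0) n s dl +
     \sum_(x : S) h x * Q D c0 Gs (ind x) n s dl.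
Proof.
move=> cg h0 HD; elim=> [|n IH] s dl Hv.
  by rewrite /= big1 ?adde0 // => x _; rewrite mule0.
have E : Q D c Gs h n.+1 s dl = stepE C D (fun t s' dl' fx =>
   gQ D c Gs (fun _ => 0) n s t s' dl' fx +
   \sum_(x : S) h x * gQ D c0 Gs (ind x) n s t s' dl' fx) s dl.
  rewrite QS; apply: stepE_congr.
  - move=> t Ht s' _; rewrite /gQ /c0; case: (Gs s').
    + rewrite adde0 (bigD1 s') //= /ind eqxx add0e mule1 big1 ?adde0 // => x /negbTE nx.
      by rewrite eq_sym nx add0e mule0.
    + rewrite IH; last by apply: valid_exp => //; exact: valid_ninfty Hv.
      by rewrite addeA; congr (_ + _); apply: eq_bigr => x _; rewrite add0e.
  - move=> r Er s' _; rewrite /gQ /c0; case: (Gs s').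
    + rewrite adde0 (bigD1 s') //= /ind eqxx add0e mule1 big1 ?adde0 // => x /negbTE nx.
      by rewrite eq_sym nx add0e mule0.
    + rewrite IH; last exact: valid_fix.
      by rewrite addeA; congr (_ + _); apply: eq_bigr => x _; rewrite add0e.
rewrite E stepE_lin //.
- by move=> t Ht s'; apply: gQ_exp_ge0.
- by move=> x t Ht s'; apply: gQ_exp_ge0 => //; first [exact: cgood_c0 | exact: ind_ge0 | done].
- by move=> r Er s'; subst dl; have [r0 _] := valid_r Hv; exact: gQ_fix_ge0.
- move=> x r Er s'; subst dl; have [r0 _] := valid_r Hv.
  by apply: gQ_fix_ge0 => //; first [exact: cgood_c0 | exact: ind_ge0 | done].
- exact: intgQ_meas.
- by move=> x; apply: intgQ_meas => //; first [exact: cgood_c0 | exact: ind_ge0 | done].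
Qed.


Lemma stepE_le1 D g s dl : valid s dl ->
  (forall t, dom dl t -> forall s', 0 <= g t s' (delay_exp C D s dl t s') false) ->
  (forall t, dom dl t -> forall s', g t s' (delay_exp C D s dl t s') false <= 1) ->
  (forall r, dl = r%:E -> forall s', g r s' (delay_fix C D s') true <= 1) ->
  measurable_fun (dom dl) (intg D g s dl) -> stepE C D g s dl <= 1.
Proof.
move=> Hv g0 g1 gf1 mi.
have Hint : forall t, dom dl t -> intg D g s dl t <= (exponential_pdf (lam C) t)%:E.
  move=> t Ht; rewrite exponential_pdfE; last exact: dom_ge0 Ht.
  rewrite /intg mulNr -[X in _ <= X]mule1; apply: lee_wpmul2l.
    by rewrite lee_fin intg_ge0_fac.
  apply: (@le_trans _ _ (\sum_(s' : S) (Pm C s s')%:E * 1)).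
    apply: lee_sum => s' _; have [->|nz] := eqVneq (Pm C s s') 0%R.
      by rewrite !mul0e.
    by apply: lee_wpmul2l; [rewrite lee_fin Pm_ge0|exact: g1].
  by under eq_bigr do rewrite mule1; rewrite sumEFin Pm_sum.
have mpdf : measurable_fun setT (fun t => (exponential_pdf (lam C) t)%:E).
  by apply/measurable_EFinP; exact: measurable_exponential_pdf.
have pdf0 : forall t, 0 <= (exponential_pdf (lam C) t)%:E.
  by move=> t; rewrite lee_fin exponential_pdf_ge0 // ltW // lam_gt0.
have I1 : \int[mu]_(t in dom dl) intg D g s dl t <=
          \int[mu]_(t in dom dl) (exponential_pdf (lam C) t)%:E.
  apply: ge0_le_integral => //.
  - exact: measurable_dom.
  - move=> t Ht; rewrite /intg; apply: mule_ge0; first by rewrite lee_fin intg_ge0_fac.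
    by apply: sume_ge0 => y _; apply: mule_ge0; [rewrite lee_fin Pm_ge0|exact: g0].
  - exact: measurable_funTS.
rewrite stepEE; case: dl Hv g0 g1 gf1 mi I1 Hint => [r| |] Hv g0 g1 gf1 mi I1 Hint; last 2 first.
- apply: le_trans I1 _; rewrite -(integral_exponential_pdf lam_gt0).
  apply: ge0_subset_integral => //; first exact: measurable_dom.
- by case: Hv => [//|[r' [//]]].
have [r0 sF] := valid_r Hv.
have Hf : fixp D g s r <= (expR (- (lam C * r)))%:E.
  rewrite /fixp -[X in _ <= X]mule1; apply: lee_wpmul2l; first by rewrite lee_fin expR_ge0.
  apply: (@le_trans _ _ (\sum_(s' : S) (Fm C s s')%:E * 1)).
    apply: lee_sum => s' _; have [->|nz] := eqVneq (Fm C s s') 0%R.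
      by rewrite !mul0e.
    by apply: lee_wpmul2l; [rewrite lee_fin Fm_ge0|exact: gf1].
  by under eq_bigr do rewrite mule1; rewrite sumEFin Fm_sum.
move: r0; rewrite le_eqVlt => /predU1P[r0|r0].
  subst r; have -> : dom 0%:E = set0.
    by apply/seteqP; split => t //= /andP[a b]; move: (le_lt_trans a b); rewrite ltxx.
  by rewrite integral_set0 add0e; apply: le_trans Hf _; rewrite mulr0 oppr0 expR0.
apply: le_trans (leeD I1 Hf) _.
apply: (@le_trans _ _ (exponential_prob (lam C) `[0%R, r] + (expR (- (lam C * r)))%:E)).
  apply: leeD => //; rewrite /exponential_prob; apply: ge0_subset_integral => //.
  + exact: measurable_dom.
  + exact: measurable_funTS.
  + by move=> t /= /andP[a b]; rewrite in_itv /= a ltW.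
by rewrite exponential_prob_itv0c // mulNr -EFinB -EFinD subrK.
Qed.


Lemma Q_le1 D Gs h : Dpos D -> (forall x, 0 <= h x) -> (forall x, h x <= 1) ->
  forall n s dl, valid s dl -> Q D c0 Gs h n s dl <= 1.
Proof.
move=> HD h0 h1; elim=> [|n IH] s dl Hv; first by rewrite /= lee01.
rewrite QS; apply: stepE_le1 => //.
- by move=> t Ht s'; apply: gQ_exp_ge0 => //; exact: cgood_c0.
- move=> t Ht s'; rewrite /gQ /c0 add0e; case: (Gs s') => //.
  by apply: IH; apply: valid_exp => //; exact: valid_ninfty Hv.
- move=> r Er s'; rewrite /gQ /c0 add0e; case: (Gs s') => //.
  by apply: IH; exact: valid_fix.
- by apply: intgQ_meas => //; exact: cgood_c0.
Qed.

Hypothesis HS : standing_assumption C.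

Local Notation A := (Sprime C K).
Definition Gp : pred S := fun s => s \in Goal K.

Lemma G_A s : Gp s -> A s.
Proof. by rewrite /Sprime /Gp => ->; rewrite orbT. Qed.

Lemma Pm_gt0 s s' : Pm C s s' != 0%R -> (0 < Pm C s s')%R.
Proof. by move=> nz; rewrite lt_neqAle eq_sym nz Pm_ge0. Qed.

Lemma Fm_gt0 s s' : s \in SF -> Fm C s s' != 0%R -> (0 < Fm C s s')%R.
Proof. by move=> sF nz; rewrite lt_neqAle eq_sym nz Fm_ge0. Qed.

Lemma exp_notA s s' : Pm C s s' != 0%R -> ~~ A s' -> s \in SF /\ s' \in SF.
Proof.
move=> nz; rewrite /Sprime !negb_or negbK => /andP[/andP[nR s'F] _]; split => //.
apply/negPn/negP => sF; move: nR; rewrite /Sreset s'F /=.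
by move/negP; apply; apply/orP; left; apply/existsP; exists s; rewrite sF Pm_gt0.
Qed.

Lemma fix_A s s' : s \in SF -> Fm C s s' != 0%R -> A s'.
Proof.
move=> sF nz; rewrite /Sprime; have [s'F|s'F] := boolP (s' \in SF); last by rewrite orbT.
apply/orP; left; apply/orP; left; rewrite /Sreset s'F /=; apply/orP; right.
by apply/existsP; exists s; rewrite sF Fm_gt0.
Qed.

Lemma exp_enter D s s' dl t : Pm C s s' != 0%R -> A s' -> ~~ Gp s' ->
  delay_exp C D s dl t s' = init_delay C D s'.
Proof.
move=> nz; rewrite /Sprime /Gp => HA nG; move: HA; rewrite (negbTE nG) orbF.
rewrite /delay_exp /init_delay; have [s'F|s'F] := boolP (s' \in SF) => //.
rewrite orbF => HR; have [sF|//] := boolP (s \in SF).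
case: HS => _ [Hdis _]; move: (Hdis s'); rewrite HR /= /Skeep s'F /=.
by move/negP; case; apply/existsP; exists s; rewrite sF Pm_gt0.
Qed.

Lemma Q_agree D1 D2 c h : Dpos D1 -> forall n s dl, valid s dl ->
  Q D1 c A h n s dl = Q D2 c A h n s dl.
Proof.
move=> HD; elim=> [//|n IH] s dl Hv; rewrite !QS; apply: stepE_congr.
- move=> t Ht s' nz; rewrite /gQ; have [HA|HA] := boolP (A s') => //.
  have [sF s'F] := exp_notA nz HA.
  have -> : delay_exp C D2 s dl t s' = delay_exp C D1 s dl t s'.
    by rewrite /delay_exp sF s'F.
  by rewrite IH //; apply: valid_exp => //; exact: valid_ninfty Hv.
- move=> r Er s' nz; subst dl; have [_ sF] := valid_r Hv.
  by rewrite /gQ (fix_A sF nz).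
Qed.

Lemma hit_notA x D : ~~ A x -> forall n s dl, Q D c0 A (ind x) n s dl = 0.
Proof.
move=> nAx; elim=> [//|n IH] s dl; rewrite QS -(stepE_0 D s dl); apply: stepE_congr.
- move=> t Ht s' _; rewrite /gQ /c0 add0e; have [HA|HA] := boolP (A s'); last exact: IH.
  by rewrite /ind; case: eqP => // E; subst s'; rewrite HA in nAx.
- move=> r Er s' _; rewrite /gQ /c0 add0e; have [HA|HA] := boolP (A s'); last exact: IH.
  by rewrite /ind; case: eqP => // E; subst s'; rewrite HA in nAx.
Qed.


Definition ndseq (u : nat -> \bar R) := {homo u : n m / (n <= m)%N >-> n <= m}.

Lemma nd_sup_lim (u : nat -> \bar R) l : ndseq u ->
  u n @[n --> \oo] --> l -> ereal_sup (range u) = l.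
Proof.
move=> nd cu; have := ereal_nondecreasing_cvgn nd => cs.
exact: (cvg_unique _ cs cu).
Qed.

Lemma sup_ub (u : nat -> \bar R) n : u n <= ereal_sup (range u).
Proof. by apply: ereal_sup_ubound; exists n. Qed.

Lemma sup_ge0 (u : nat -> \bar R) : (forall n, 0 <= u n) -> 0 <= ereal_sup (range u).
Proof. by move=> u0; apply: le_trans (sup_ub u 0). Qed.

Lemma sup_le (u v : nat -> \bar R) : (forall n, u n <= v n) ->
  ereal_sup (range u) <= ereal_sup (range v).
Proof.
by move=> uv; apply: ge_ereal_sup => _ [n _ <-]; apply: le_trans (uv n) (sup_ub v n).
Qed.

Lemma sup_le_bound (u : nat -> \bar R) M : (forall n, u n <= M) -> ereal_sup (range u) <= M.
Proof. by move=> uM; apply: ge_ereal_sup => _ [n _ <-]. Qed.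

Lemma sup_cst (r : \bar R) : ereal_sup (range (fun _ : nat => r)) = r.
Proof. by apply: nd_sup_lim => //; exact: cvg_cst. Qed.

Lemma sup_add (p q : nat -> \bar R) : ndseq p -> ndseq q ->
  (forall n, 0 <= p n) -> (forall n, 0 <= q n) ->
  ereal_sup (range (fun n => p n + q n)) = ereal_sup (range p) + ereal_sup (range q).
Proof.
move=> ndp ndq p0 q0; apply: nd_sup_lim.
  by move=> m n mn; apply: leeD; [exact: ndp|exact: ndq].
apply: cvgeD; last 2 first.
- exact: ereal_nondecreasing_cvgn.
- exact: ereal_nondecreasing_cvgn.
by apply: ge0_adde_def; rewrite inE; exact: sup_ge0.
Qed.

Lemma sup_mul (b e : nat -> \bar R) : ndseq b -> ndseq e ->
  (forall n, 0 <= b n) -> (forall n, 0 <= e n) -> (forall n, b n <= 1) ->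
  ereal_sup (range (fun n => b n * e n)) = ereal_sup (range b) * ereal_sup (range e).
Proof.
move=> ndb nde b0 e0 b1.
have sb0 := sup_ge0 b0; have sb1 : ereal_sup (range b) <= 1 by exact: sup_le_bound.
move: sb0; rewrite le_eqVlt => /predU1P[sb|sb].
  have bz : forall n, b n = 0.
    by move=> n; apply/eqP; rewrite eq_le b0 andbT sb; exact: sup_ub.
  rewrite -sb mul0e (_ : (fun n => b n * e n) = fun _ => 0) ?sup_cst //.
  by apply: funext => n; rewrite bz mul0e.
apply: nd_sup_lim.
  by move=> m n mn; apply: lee_pmul => //; [exact: ndb|exact: nde].
apply: cvgeM; last 2 first.
- exact: ereal_nondecreasing_cvgn.
- exact: ereal_nondecreasing_cvgn.
have fb : ereal_sup (range b) \is a fin_num.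
  by rewrite ge0_fin_numE ?(ltW sb) // (le_lt_trans sb1) // ltey.
move: fb sb; case: (ereal_sup (range b)) => // r _; rewrite lte_fin => r0.
by case: (ereal_sup (range e)) => // *; rewrite /mule_def /= lt0r_neq0.
Qed.

Lemma sup_sum (P : pred S) (u : S -> nat -> \bar R) :
  (forall x, ndseq (u x)) -> (forall x n, 0 <= u x n) ->
  ereal_sup (range (fun n => \sum_(x | P x) u x n)) =
  \sum_(x | P x) ereal_sup (range (u x)).
Proof.
move=> nd u0; apply: nd_sup_lim.
  by move=> m n mn; apply: lee_sum => x _; exact: nd.
have aux : forall l : seq S, (fun n => \sum_(x <- l | P x) u x n) @ \oo -->
    \sum_(x <- l | P x) ereal_sup (range (u x)).
  elim=> [|y l IH].
    rewrite big_nil (_ : (fun n => _) = fun _ => 0); first exact: cvg_cst.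
    by apply: funext => n; rewrite big_nil.
  rewrite big_cons (_ : (fun n => _) = fun n => if P y then u y n + \sum_(x <- l | P x) u x n
     else \sum_(x <- l | P x) u x n); last by apply: funext => n; rewrite big_cons.
  case: (P y) => //.
  apply: (cvgeD _ (ereal_nondecreasing_cvgn (nd y)) IH).
  apply: ge0_adde_def; rewrite inE; first exact: sup_ge0.
  by apply: sume_ge0 => x _; exact: sup_ge0.
exact: aux.
Qed.


Definition tc : S -> R -> S -> bool -> \bar R := fun s t s' fx => trans_cost K s t s' fx.

Lemma cgood_tc : cgood tc.
Proof.
case: HK => Rt0 [IP0 IF0]; split.
  move=> s t s' fx t0; rewrite /tc /trans_cost lee_fin; apply: addr_ge0.
    exact: mulr_ge0.
  by case: fx.
move=> s s' fx; rewrite /tc /trans_cost; apply/measurable_EFinP.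
by apply: measurable_funD => //; apply: measurable_funM.
Qed.

Lemma costN_Q D Gs n s dl : costN C K D Gs n s dl = Q D tc Gs (fun _ => 0) n s dl.
Proof.
elim: n s dl => [//|n IH] s dl /=; congr stepE.
by apply: funext => t; apply: funext => s'; apply: funext => dl'; apply: funext => fx; rewrite IH.
Qed.

Lemma reachN_Q D Gs n s dl : reachN C D Gs n s dl = Q D c0 Gs (fun _ => 1) n s dl.
Proof.
elim: n s dl => [//|n IH] s dl /=; congr stepE.
apply: funext => t; apply: funext => s'; apply: funext => dl'; apply: funext => fx.
by rewrite IH /c0 add0e.
Qed.

Lemma hitN_Q D Gs x n s dl : hitN C D Gs x n s dl = Q D c0 Gs (ind x) n s dl.
Proof.
elim: n s dl => [//|n IH] s dl /=; congr stepE.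
apply: funext => t; apply: funext => s'; apply: funext => dl'; apply: funext => fx.
by rewrite IH /c0 add0e.
Qed.

Lemma Q_c0_0 D Gs n s dl : Q D c0 Gs (fun _ => 0) n s dl = 0.
Proof.
elim: n s dl => [//|n IH] s dl; rewrite QS.
transitivity (stepE C D (fun _ _ _ _ => 0) s dl); last exact: stepE_0.
apply: stepE_congr.
- by move=> t _ s' _; rewrite /gQ /c0 add0e; case: (Gs s') => //; rewrite IH.
- by move=> r _ s' _; rewrite /gQ /c0 add0e; case: (Gs s') => //; rewrite IH.
Qed.


Section Fixd.
Variable d : S -> R.
Hypothesis Hd : delay_fun C d.

Lemma Dd : Dpos d. Proof. exact: Hd. Qed.

Definition fresh s := init_delay C d s.

Lemma valid_fresh s : valid s (fresh s).
Proof.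
rewrite /fresh /init_delay; case: ifPn => sF; last by left.
by right; exists (d s); split => //; split => //; exact/ltW/Hd.
Qed.

Definition Ds s := delay_at s (strat C d s).

Lemma Ds_pos s : Dpos (Ds s).
Proof.
move=> x xF; rewrite /Ds /delay_at; case: (x =P s) => [E|_]; last exact: ltr01.
by subst x; rewrite /strat xF; exact: Hd.
Qed.

Lemma init_Ds s : init_delay C (Ds s) s = fresh s.
Proof.
rewrite /fresh /init_delay /Ds /delay_at eqxx /strat.
by case: (boolP (s \in SF)) => sF; rewrite ?sF ?(negbTE sF).
Qed.

Definition T s x := ereal_sup (range (fun n => Q d c0 A (ind x) n s (fresh s))).

Lemma Tm_T s x : Tm C K s (strat C d s) x = T s x.
Proof.
rewrite /Tm /T -/(Ds s) init_Ds.
have -> : (fun n => hitN C (Ds s) A x n s (fresh s)) =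
          (fun n => Q d c0 A (ind x) n s (fresh s)).
  apply: funext => n; rewrite hitN_Q; symmetry; apply: Q_agree; [exact: Dd|exact: valid_fresh].
by [].
Qed.

Lemma cm_E s : cm C K s (strat C d s) =
  if ereal_sup (range (fun n => Q d c0 A (fun _ => 1) n s (fresh s))) < 1 then +oo
  else ereal_sup (range (fun n => Q d tc A (fun _ => 0) n s (fresh s))).
Proof.
rewrite /cm /ExpCost /ExpCostFrom -/(Ds s) init_Ds.
have -> : (fun n => reachN C (Ds s) A n s (fresh s)) =
          (fun n => Q d c0 A (fun _ => 1) n s (fresh s)).
  apply: funext => n; rewrite reachN_Q; symmetry; apply: Q_agree; [exact: Dd|exact: valid_fresh].
have -> : (fun n => costN C K (Ds s) A n s (fresh s)) =
          (fun n => Q d tc A (fun _ => 0) n s (fresh s)).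
  apply: funext => n; rewrite costN_Q; symmetry; apply: Q_agree; [exact: Dd|exact: valid_fresh].
by [].
Qed.

Lemma hit_ge0 x n s : 0 <= Q d c0 A (ind x) n s (fresh s).
Proof. by apply: Q_ge0; [exact: cgood_c0|exact: ind_ge0|exact: Dd|exact: valid_fresh]. Qed.

Lemma hit_le1 x n s : Q d c0 A (ind x) n s (fresh s) <= 1.
Proof.
apply: Q_le1; [exact: Dd|exact: ind_ge0| |exact: valid_fresh].
by move=> y; rewrite /ind; case: ifP => //; rewrite lee01.
Qed.

Lemma hit_nd x s : ndseq (fun n => Q d c0 A (ind x) n s (fresh s)).
Proof.
move=> m n mn; apply: Q_nd => //; first [exact: cgood_c0|exact: ind_ge0|exact: Dd|exact: valid_fresh].
Qed.

Lemma T_ge0 s x : 0 <= T s x.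
Proof. by apply: sup_ge0 => n; exact: hit_ge0. Qed.

Lemma T_le1 s x : T s x <= 1.
Proof. by apply: sup_le_bound => n; exact: hit_le1. Qed.

Fixpoint MQ (cM : S -> \bar R) (r : \bar R) (n : nat) (s : S) : \bar R :=
  match n with
  | O => 0
  | n'.+1 => cM s + \sum_(x : S | A x) T s x * (if Gp x then r else MQ cM r n' x)
  end.

Lemma costM_MQ n s : costM C K d n s = MQ (fun s => cm C K s (strat C d s)) 0 n s.
Proof.
elim: n s => [//|n IH] s /=; congr (_ + _); apply: eq_bigr => x _.
by rewrite Tm_T IH.
Qed.

Lemma reachM_MQ n s : reachM C K d n s = MQ (fun _ => 0) 1 n s.
Proof.
elim: n s => [//|n IH] s /=; rewrite add0e; apply: eq_bigr => x _.
by rewrite Tm_T IH.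
Qed.

Lemma MQ_ge0 cM r : (forall s, 0 <= cM s) -> 0 <= r -> forall n s, 0 <= MQ cM r n s.
Proof.
move=> c0' r0; elim=> [//|n IH] s /=; apply: adde_ge0 => //.
apply: sume_ge0 => x _; apply: mule_ge0; first exact: T_ge0.
by case: (Gp x).
Qed.


Lemma claim1 c r cM : cgood c -> 0 <= r -> (forall s, 0 <= cM s) ->
  (forall n s, Q d c A (fun _ => 0) n s (fresh s) <= cM s) ->
  forall n s, Q d c Gp (fun _ => r) n s (fresh s) <= MQ cM r n s.
Proof.
move=> cg r0 cM0 HcM; elim=> [//|n IH] s.
set H := fun x => if Gp x then r else MQ cM r n x.
have H0 : forall x, 0 <= H x.
  by move=> x; rewrite /H; case: (Gp x) => //; exact: MQ_ge0.
have inner : forall k, (k <= n.+1)%N -> forall s0 dl, valid s0 dl ->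
    Q d c Gp (fun _ => r) k s0 dl <= Q d c A H k s0 dl.
  elim=> [//|k IHk] kn s0 dl Hv; rewrite !QS; apply: stepE_le => //.
  - by move=> t Ht s'; apply: gQ_exp_ge0 => //; exact: Dd.
  - by apply: intgQ_meas => //; exact: Dd.
  - by apply: intgQ_meas => //; exact: Dd.
  - move=> t Ht s' nz; rewrite /gQ; apply: leeD => //.
    have [G'|nG] := boolP (Gp s'); first by rewrite (G_A G') /H G'.
    have [HA|nA] := boolP (A s').
      rewrite /H (negbTE nG) (exp_enter _ _ _ nz HA nG) -/(fresh s').
      apply: le_trans _ (IH s'); apply: Q_nd => //; first [exact: cg | exact: Dd | exact: valid_fresh | by rewrite -ltnS | by move=> ? | done].
    apply: IHk; first exact: ltnW.
    by apply: valid_exp => //; first [exact: Dd | exact: (valid_ninfty Hv)].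
  - move=> r' Er s' nz; rewrite /gQ; apply: leeD => //.
    have [G'|nG] := boolP (Gp s'); first by rewrite (G_A G') /H G'.
    have [HA|nA] := boolP (A s').
      rewrite /H (negbTE nG) -/(fresh s').
      apply: le_trans _ (IH s'); apply: Q_nd => //; first [exact: cg | exact: Dd | exact: valid_fresh | by rewrite -ltnS | by move=> ? | done].
    apply: IHk; first exact: ltnW.
    by apply: valid_fix; exact: Dd.
apply: le_trans (inner n.+1 (leqnn _) s (fresh s) (valid_fresh s)) _.
rewrite Q_lin //; last first; first [exact: Dd | exact: valid_fresh | idtac].
rewrite [MQ _ _ _ _]/=; apply: leeD; first exact: HcM.
have -> : \sum_(x : S) H x * Q d c0 A (ind x) n.+1 s (fresh s) =
    \sum_(x : S | A x) H x * Q d c0 A (ind x) n.+1 s (fresh s).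
  rewrite [RHS]big_mkcond; apply: eq_bigr => x _; case: ifPn => // nA.
  by rewrite hit_notA // mule0.
apply: lee_sum => x Ax; rewrite muleC; apply: lee_wpmul2r; first exact: H0.
exact: sup_ub.
Qed.


Definition V c r x := ereal_sup (range (fun m => Q d c Gp (fun _ => r) m x (fresh x))).

Lemma bell_ge c r : cgood c -> 0 <= r -> forall s,
  ereal_sup (range (fun m => Q d c A (fun _ => 0) m s (fresh s))) +
  \sum_(x : S | A x) T s x * (if Gp x then r else V c r x) <= V c r s.
Proof.
move=> cg r0 s.
pose a := fun m => Q d c A (fun _ => 0) m s (fresh s).
pose b := fun x m => Q d c0 A (ind x) m s (fresh s).
pose e := fun x m => if Gp x then r else Q d c Gp (fun _ => r) m x (fresh x).
have nda : ndseq a.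
  by move=> m n mn; apply: Q_nd => //; first [exact: Dd | exact: valid_fresh | done].
have a0 : forall m, 0 <= a m.
  by move=> m; apply: Q_ge0 => //; first [exact: Dd | exact: valid_fresh | done].
have nde : forall x, ndseq (e x).
  move=> x m n mn; rewrite /e; case: (Gp x) => //.
  by apply: Q_nd => //; first [exact: Dd | exact: valid_fresh | done].
have e0 : forall x m, 0 <= e x m.
  move=> x m; rewrite /e; case: (Gp x) => //.
  by apply: Q_ge0 => //; first [exact: Dd | exact: valid_fresh | done].
have ndbe : forall x, ndseq (fun m => b x m * e x m).
  by move=> x m n mn; apply: lee_pmul => //; [exact: hit_ge0|exact: hit_nd|exact: nde].
have be0 : forall x m, 0 <= b x m * e x m.
  by move=> x m; apply: mule_ge0; [exact: hit_ge0|exact: e0].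
rewrite (eq_bigr (fun x => ereal_sup (range (fun m => b x m * e x m)))); last first.
  move=> x _; rewrite sup_mul //; last 3 first.
  - exact: hit_nd.
  - by move=> m; exact: hit_ge0.
  - by move=> m; exact: hit_le1.
  congr (_ * _); rewrite /e; case: (Gp x) => //; by rewrite sup_cst.
rewrite -(sup_sum A ndbe be0).
have ndq : ndseq (fun m => \sum_(x : S | A x) b x m * e x m).
  by move=> m n mn; apply: lee_sum => x _; exact: ndbe.
have q0 : forall m, 0 <= \sum_(x : S | A x) b x m * e x m.
  by move=> m; apply: sume_ge0 => x _; exact: be0.
rewrite -(sup_add nda ndq a0 q0).
apply: sup_le_bound => m.
have inner : forall k s0 dl, valid s0 dl ->
    Q d c A (fun x => e x m) k s0 dl <= Q d c Gp (fun _ => r) (k + m) s0 dl.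
  elim=> [|k IHk] s0 dl Hv.
    by rewrite add0n; apply: Q_ge0 => //; first [exact: Dd | exact: valid_fresh | done].
  rewrite addSn !QS; apply: stepE_le => //.
  - by move=> t Ht s'; apply: gQ_exp_ge0 => //; exact: Dd.
  - by apply: intgQ_meas => //; exact: Dd.
  - by apply: intgQ_meas => //; exact: Dd.
  - move=> t Ht s' nz; rewrite /gQ; apply: leeD => //.
    have [G'|nG] := boolP (Gp s'); first by rewrite (G_A G') /e G'.
    have [HA|nA] := boolP (A s').
      rewrite /e (negbTE nG) (exp_enter _ _ _ nz HA nG) -/(fresh s').
      apply: Q_nd => //; first [exact: Dd | exact: valid_fresh | exact: leq_addl | done].
    apply: IHk.
    by apply: valid_exp => //; first [exact: Dd | exact: (valid_ninfty Hv)].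
  - move=> r' Er s' nz; rewrite /gQ; apply: leeD => //.
    have [G'|nG] := boolP (Gp s'); first by rewrite (G_A G') /e G'.
    have [HA|nA] := boolP (A s').
      rewrite /e (negbTE nG) -/(fresh s').
      apply: Q_nd => //; first [exact: Dd | exact: valid_fresh | exact: leq_addl | done].
    apply: IHk.
    by apply: valid_fix; exact: Dd.
apply: le_trans _ (sup_ub _ (m + m)); apply: le_trans _ (inner m s (fresh s) (valid_fresh s)).
rewrite Q_lin //; last first; first [exact: Dd | exact: valid_fresh | by move=> x; exact: e0 | idtac].
rewrite /a; apply: leeD => //.
have -> : \sum_(x : S) e x m * Q d c0 A (ind x) m s (fresh s) =
    \sum_(x : S | A x) e x m * Q d c0 A (ind x) m s (fresh s).
  rewrite [RHS]big_mkcond; apply: eq_bigr => x _; case: ifPn => // nA.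
  by rewrite hit_notA // mule0.
by apply: lee_sum => x _; rewrite muleC.
Qed.


Lemma V_ge0 c r x : cgood c -> 0 <= r -> 0 <= V c r x.
Proof.
move=> cg r0; apply: sup_ge0 => m.
by apply: Q_ge0 => //; first [exact: Dd | exact: valid_fresh | done].
Qed.

Lemma V_le1 x : V c0 1 x <= 1.
Proof.
apply: sup_le_bound => m; apply: Q_le1 => //; first [exact: Dd | exact: valid_fresh | by move=> ? | by move=> ?; exact: lee01 | done].
Qed.

Lemma claim2_reach n s : MQ (fun _ => 0) 1 n s <= V c0 1 s.
Proof.
elim: n s => [|n IH] s; first by apply: V_ge0 => //; first [exact: cgood_c0|exact: lee01].
have := bell_ge cgood_c0 lee01 s.
rewrite (_ : (fun m => Q d c0 A (fun _ => 0) m s (fresh s)) = fun _ => 0); last first.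
  by apply: funext => m; rewrite Q_c0_0.
rewrite sup_cst; apply: le_trans; rewrite /=; apply: leeD => //.
apply: lee_sum => x _; apply: lee_wpmul2l; first exact: T_ge0.
by case: (Gp x).
Qed.

Lemma rho_eq s : ereal_sup (range (fun n => MQ (fun _ => 0) 1 n s)) = V c0 1 s.
Proof.
apply/le_anti/andP; split; first by apply: sup_le_bound => n; exact: claim2_reach.
apply: sup_le => n; apply: claim1 => //; first [exact: cgood_c0 | exact: lee01 | done | idtac].
by move=> m x; rewrite Q_c0_0.
Qed.

Lemma QG_le_QA1 m s0 dl : valid s0 dl ->
  Q d c0 Gp (fun _ => 1) m s0 dl <= Q d c0 A (fun _ => 1) m s0 dl.
Proof.
elim: m s0 dl => [//|m IH] s0 dl Hv; rewrite !QS; apply: stepE_le => //.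
- by move=> t Ht s'; apply: gQ_exp_ge0 => //; first [exact: Dd | exact: cgood_c0 | by move=> ?; exact: lee01].
- by apply: intgQ_meas => //; first [exact: Dd | exact: cgood_c0 | by move=> ?; exact: lee01].
- by apply: intgQ_meas => //; first [exact: Dd | exact: cgood_c0 | by move=> ?; exact: lee01].
- move=> t Ht s' nz; rewrite /gQ; apply: leeD => //.
  have [G'|nG] := boolP (Gp s'); first by rewrite (G_A G').
  have [HA|nA] := boolP (A s').
    apply: Q_le1 => //; first [exact: Dd | by move=> ?; exact: lee01 | idtac].
    by apply: valid_exp => //; first [exact: Dd | exact: (valid_ninfty Hv)].
  by apply: IH; apply: valid_exp => //; first [exact: Dd | exact: (valid_ninfty Hv)].
- move=> r' Er s' nz; rewrite /gQ; apply: leeD => //.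
  have [G'|nG] := boolP (Gp s'); first by rewrite (G_A G').
  have [HA|nA] := boolP (A s').
    apply: Q_le1 => //; first [exact: Dd | by move=> ?; exact: lee01 | idtac].
    by apply: valid_fix; exact: Dd.
  by apply: IH; apply: valid_fix; exact: Dd.
Qed.

Definition good s := ~~ (V c0 1 s < 1).

Lemma good_cm s : good s ->
  cm C K s (strat C d s) = ereal_sup (range (fun n => Q d tc A (fun _ => 0) n s (fresh s))).
Proof.
move=> gs; rewrite cm_E; case: ifPn => // H; move/negP: gs; case.
apply: le_lt_trans H; apply: sup_le => m; apply: QG_le_QA1; exact: valid_fresh.
Qed.

Lemma T_sum_le1 s : \sum_(x : S | A x) T s x <= 1.
Proof.
rewrite /T -(sup_sum A (fun x => hit_nd x s) (fun x n => hit_ge0 x n s)).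
apply: sup_le_bound => m.
have := @Q_lin d c0 A (fun _ => 1) cgood_c0 (fun _ => lee01) Dd m s (fresh s) (valid_fresh s).
rewrite Q_c0_0 add0e => E.
have -> : \sum_(x : S | A x) Q d c0 A (ind x) m s (fresh s) = Q d c0 A (fun _ => 1) m s (fresh s).
  rewrite E big_mkcond; apply: eq_bigr => x _; rewrite mul1e; case: ifPn => // nA.
  by rewrite hit_notA.
apply: Q_le1 => //; first [exact: Dd | exact: valid_fresh | by move=> ?; exact: lee01 | done].
Qed.

Lemma rho_bell s : V c0 1 s <= \sum_(x : S | A x) T s x * (if Gp x then 1 else V c0 1 x).
Proof.
rewrite -(rho_eq s); apply: sup_le_bound => -[|n] /=.
  apply: sume_ge0 => x _; apply: mule_ge0; first exact: T_ge0.
  by case: (Gp x) => //; apply: V_ge0 => //; first [exact: cgood_c0|exact: lee01].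
rewrite add0e; apply: lee_sum => x _; apply: lee_wpmul2l; first exact: T_ge0.
by case: (Gp x) => //; rewrite -rho_eq; exact: sup_ub.
Qed.

Lemma fin01 (z : \bar R) : 0 <= z -> z <= 1 -> z \is a fin_num.
Proof. by move=> z0 z1; rewrite ge0_fin_numE // (le_lt_trans z1) // ltey. Qed.

Lemma good_prop s x : good s -> A x -> ~~ Gp x -> T s x != 0 -> good x.
Proof.
move=> gs Ax nG Tnz; apply/negP => lt; move/negP: gs; apply.
pose H y := if Gp y then 1 else V c0 1 y.
have H0 : forall y, 0 <= H y.
  by move=> y; rewrite /H; case: (Gp y) => //; apply: V_ge0 => //; first [exact: cgood_c0|exact: lee01].
have H1 : forall y, H y <= 1 by move=> y; rewrite /H; case: (Gp y) => //; exact: V_le1.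
apply: le_lt_trans (rho_bell s) _; rewrite -/H.
have := T_sum_le1 s; rewrite (bigD1 x) //= (bigD1 x Ax) /= => Tle.
pose Rst := \sum_(y | A y && (y != x)) T s y * H y.
pose Rst' := \sum_(y | A y && (y != x)) T s y.
have Rle : Rst <= Rst'.
  by apply: lee_sum => y _; rewrite -[X in _ <= X]mule1; apply: lee_wpmul2l; [exact: T_ge0|exact: H1].
have R0 : 0 <= Rst by apply: sume_ge0 => y _; apply: mule_ge0; [exact: T_ge0|exact: H0].
have R'0 : 0 <= Rst' by apply: sume_ge0 => y _; exact: T_ge0.
have Tx0 : 0 < T s x by rewrite lt_neqAle eq_sym Tnz T_ge0.
have R'1 : Rst' <= 1 by apply: le_trans Tle; rewrite leeDr // ltW.
have finR : Rst \is a fin_num by apply: fin01 => //; exact: le_trans Rle R'1.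
apply: (@lt_le_trans _ _ (T s x + Rst')) => //.
apply: lte_leD => //.
rewrite -[X in _ < X]mule1 lte_pmul2l //; first by rewrite /H (negbTE nG).
by apply: fin01; [exact: T_ge0|exact: T_le1].
Qed.

Definition cmd s := cm C K s (strat C d s).

Lemma cm_ge0 s : 0 <= cmd s.
Proof.
rewrite /cmd cm_E; case: ifPn => // _; apply: sup_ge0 => m.
by apply: Q_ge0 => //; first [exact: Dd | exact: valid_fresh | exact: cgood_tc | done].
Qed.

Lemma claim2_cost n s : good s -> MQ cmd 0 n s <= V tc 0 s.
Proof.
elim: n s => [|n IH] s gs; first by apply: V_ge0 => //; exact: cgood_tc.
apply: le_trans (bell_ge cgood_tc (lexx 0) s); rewrite /= /cmd good_cm //.
apply: leeD => //; apply: lee_sum => x Ax.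
case: ifPn => // nG; have [->|Tnz] := eqVneq (T s x) 0; first by rewrite !mul0e.
apply: lee_wpmul2l; first exact: T_ge0.
exact: (IH x (good_prop gs Ax nG Tnz)).
Qed.

Lemma E_eq : E_C C K d = E_M C K d.
Proof.
rewrite /E_C /ExpCost /ExpCostFrom /E_M -/(fresh (Defs.sin C)).
have -> : (fun n => reachN C d (fun s => s \in Goal K) n (Defs.sin C) (fresh (Defs.sin C))) =
          (fun n => Q d c0 Gp (fun _ => 1) n (Defs.sin C) (fresh (Defs.sin C))).
  by apply: funext => n; rewrite reachN_Q.
have -> : (fun n => costN C K d (fun s => s \in Goal K) n (Defs.sin C) (fresh (Defs.sin C))) =
          (fun n => Q d tc Gp (fun _ => 0) n (Defs.sin C) (fresh (Defs.sin C))).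
  by apply: funext => n; rewrite costN_Q.
have -> : (fun n => reachM C K d n (Defs.sin C)) = (fun n => MQ (fun _ => 0) 1 n (Defs.sin C)).
  by apply: funext => n; rewrite reachM_MQ.
have -> : (fun n => costM C K d n (Defs.sin C)) = (fun n => MQ cmd 0 n (Defs.sin C)).
  by apply: funext => n; rewrite costM_MQ.
rewrite rho_eq -/(V c0 1 (Defs.sin C)); case: ifPn => // gs.
apply/le_anti/andP; split.
  apply: sup_le => n; apply: claim1 => //; first [exact: cgood_tc | exact: cm_ge0 | done | idtac].
  move=> m s; rewrite /cmd cm_E; case: ifPn => _; first exact: leey.
  exact: sup_ub.
by apply: sup_le_bound => n; exact: claim2_cost.
Qed.

End Fixd.

End Main.

Theorem proposition2 (R : realType) (S : finType)
  (C : fdCTMC R S) (K : costStruct R S) :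
  fdCTMC_wf C -> cost_wf K -> standing_assumption C ->
  (forall d : S -> R, delay_fun C d -> E_C C K d = E_M C K d) /\
  ereal_inf [set E_C C K d | d in [set d : S -> R | delay_fun C d]] =
  ereal_inf [set E_M C K d | d in [set d : S -> R | delay_fun C d]].
Proof.
move=> HC HK HS.
have H : forall d : S -> R, delay_fun C d -> E_C C K d = E_M C K d.
  by move=> d Hd; exact: (E_eq HC HK HS Hd).
split => //; congr ereal_inf; apply/seteqP; split => _ [d Hd <-]; exists d => //.
  by rewrite H.
by rewrite -H.
Qed.
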